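(* Let $(p_n)_{n\in\mathbb{N}}$ be a sequence in $(0,1)$ (so $p_n\neq1$ for all $n$) with $\lim_{n\to\infty}p_n=1$, and set $q_n:=(1-p_n)^{-1}$. Consider, for each $n$, the auxiliary process on some connected graph with survival parameter $p_n$, and let $k=k(n)$ be an instant. Let $A_k$ be the number of active particles at the end of round $k$, and let $T(k)$ be the sum of the remaining lifetimes of these $A_k$ particles, i.e. the total number of further steps (rounds in which they participate and survive) that these particles will still take before dying, with $T(k):=0$ if $A_k=0$. Then for every $\epsilon>0$ and $b>0$: (i) $\lim_{n\to\infty}P\big(T(k)\leq(1-\epsilon/2)bnq_n \,\big|\, A_k\leq(1-\epsilon)bn\big)=1$; (ii) $\lim_{n\to\infty}P\big(T(k)\geq(1+\epsilon/2)bnq_n \,\big|\, A_k\geq(1+\epsilon)bn\big)=1$.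
   Context: Auxiliary process on a connected graph $\mathcal{G}=(\mathcal{V},\mathcal{E})$ with root $o$ and survival parameter $p$: each $v\neq o$ initially carries $\eta_v$ inactive particles and $o$ carries $1+\eta_o$ active particles (the $\eta_v$ are nonnegative integer random variables, not necessarily i.i.d.); these are the original particles. At each round $k=1,2,\dots$ exactly one active particle is chosen (by an arbitrary rule) to participate; independently of everything else it survives with probability $p$, in which case it moves to a uniformly chosen neighbouring vertex and activates all inactive particles there, and otherwise it dies and is removed. At the round $R$ at which the last living original active particle dies, all remaining inactive particles are called extra, and a new extra active particle is injected at $o$; afterwards, each time the only living active particle dies, a new extra active particle is injected at $o$. For round $k$ define $X_k=0$ if the participating particle dies; $X_k=1$ if it survives and moves to a previously visited vertex or to a never-visited vertex $v$ with $\eta_v=0$; $X_k=j\geq2$ if it survives and moves to a never-visited vertex $v$ with $\eta_v=j-1$. Set $A'_0=1+\eta_o$, $A'_k=1+\eta_o+\sum_{j=1}^k(X_j-1)$, $R=\inf\{k:A'_k=0\}$, and $A_k=A'_k\mathbf{1}_{\{k<R\}}$ (the number of active particles at the end of round $k$). Conditional probabilities are understood for those $n$ where the conditioning event has positive probability. *)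

(* Defs.v *)
From HB Require Import structures.
From mathcomp Require Import all_boot all_order all_algebra.
From mathcomp Require Import all_classical all_reals all_analysis.
From Stdlib Require List.

Set Implicit Arguments.
Unset Strict Implicit.
Unset Printing Implicit Defensive.
Import Order.TTheory GRing.Theory Num.Theory.
Local Open Scope classical_set_scope.
Local Open Scope ring_scope.

(* Original particles are indexed by (home vertex, index):              *)
(*   (v, i) with i < eta v for v <> o, and (o, i) with i < 1 + eta o.    *)
Record pstate (V : eqType) := PState {
  ps_alive : seq (V * nat);
  ps_used : V * nat -> nat;        (* number of rounds a particle participated in *)
  ps_pos : V * nat -> V;
  ps_visited : seq V }.

Section Dynamics.
Variables (V : eqType) (o : V).
(* random inputs, for a fixed outcome omega *)
Variable eta : V -> nat.
(* coin used the m-th time particle x participates: true = survives *)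
Variable B : V * nat -> nat -> bool.
(* neighbour chosen the m-th time particle x participates, when at v *)
Variable N : V * nat -> nat -> V -> V.
(* the (arbitrary, history-dependent) rule choosing the participating
   active particle: index (mod the number of alive particles) into the
   list of living active particles of the current state *)
Variable rule : seq (pstate V) -> nat.

Definition st0 : pstate V :=
  PState [seq (o, i) | i <- iota 0 (eta o).+1] (fun _ => 0%N) (fun x => x.1) [:: o].

Definition step (H : seq (pstate V)) : pstate V :=
  let st := last st0 H in
  match ps_alive st with
  | [::] => st
  | a0 :: _ =>
    let x := nth a0 (ps_alive st) (rule H %% size (ps_alive st)) in
    let m := ps_used st x in
    let used' := fun y => if y == x then m.+1 else ps_used st y in
    if B x m then
      let w := N x m (ps_pos st x) in
      let pos' := fun y => if y == x then w else ps_pos st y in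
      if w \in ps_visited st then PState (ps_alive st) used' pos' (ps_visited st)
      else PState (ps_alive st ++ [seq (w, i) | i <- iota 0 (eta w)])
                  used' pos' (w :: ps_visited st)
    else PState (rem x (ps_alive st)) used' (ps_pos st) (ps_visited st)
  end.

Fixpoint hist (k : nat) : seq (pstate V) :=
  match k with
  | 0 => [:: st0]
  | k'.+1 => rcons (hist k') (step (hist k'))
  end.

Definition state (k : nat) : pstate V := last st0 (hist k).

End Dynamics.

(* number of further survivals of a particle whose coin sequence is f,
   having already participated u times: the index of the first failing
   coin from u on (+oo if it never dies) *)
Definition rem_life (R : realType) (f : nat -> bool) (u : nat) : \bar R :=
  ereal_inf [set (j%:R)%:E | j in [set j : nat | f (u + j)%N = false]].

(* Mutual independence of a family of "components", each component c
   generating the sigma-algebra of the pi-system [events c]. *)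
Definition mutually_indep (d : measure_display) (T : measurableType d)
  (R : realType) (P : probability T R) (C : Type) (events : C -> set (set T)) :=
  forall L : seq (C * set T), List.NoDup (map fst L) ->
    (forall x, List.In x L -> events x.1 x.2) ->
    fine (P [set w | forall x, List.In x L -> x.2 w])
      = \prod_(x <- L) fine (P x.2).

Inductive comp (V : Type) :=
  CEta | CB of V * nat & nat | CN of V * nat & nat & V.
Arguments CEta {V}.

Record aux_setup (R : realType) (p : R) := AuxSetup {
  aV : eqType;
  anbrs : aV -> seq aV;
  aroot : aV;
  nbrs_sym : forall u v, (u \in anbrs v) = (v \in anbrs u);
  nbrs_irr : forall v, v \notin anbrs v;
  nbrs_uniq : forall v, uniq (anbrs v);
  nbrs_nonempty : forall v, anbrs v != [::];
  connected : forall u v, exists s, path (fun a b => b \in anbrs a) u s /\ last u s = v;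
  adisp : measure_display;
  aOmega : measurableType adisp;
  aP : probability aOmega R;
  aeta : aV -> aOmega -> nat;
  aB : aV * nat -> nat -> aOmega -> bool;
  aN : aV * nat -> nat -> aV -> aOmega -> aV;
  arule : seq (pstate aV) -> nat;
  eta_meas : forall v j, measurable [set w | aeta v w = j];
  B_meas : forall x m, measurable [set w | aB x m w];
  N_meas : forall x m v u, measurable [set w | aN x m v w = u];
  B_law : forall x m, aP [set w | aB x m w] = p%:E;
  N_law : forall x m v u, u \in anbrs v ->
    aP [set w | aN x m v w = u] = ((size (anbrs v))%:R^-1)%:E;
  inputs_indep : mutually_indep aP (fun c : comp aV =>
    match c with
    | CEta => [set E | exists (S : seq aV) (a : aV -> nat),
                 E = [set w | forall v, v \in S -> aeta v w = a v]]
    | CB x m => [set E | exists b : bool, E = [set w | aB x m w = b]]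
    | CN x m v => [set E | exists u : aV, E = [set w | aN x m v w = u]]
    end)
}.

Section Observables.
Variables (R : realType) (p : R) (S : aux_setup p).

Definition aux_state (k : nat) (w : aOmega S) : pstate (aV S) :=
  state (aroot S) (fun v => aeta v w) (fun x m => aB x m w)
        (fun x m v => aN x m v w) (@arule _ _ S) k.

Definition auxA (k : nat) (w : aOmega S) : nat := size (ps_alive (aux_state k w)).

Definition auxT (k : nat) (w : aOmega S) : \bar R :=
  (\sum_(x <- ps_alive (aux_state k w))
     rem_life R (fun m => aB x m w) (ps_used (aux_state k w) x))%E.
End Observables.

(* P(E_n | F_n) --> 1 as n --> oo, along the n with P(F_n) > 0 *)
Definition cond_to_one (R : realType) (p : nat -> R)
  (S : forall n, aux_setup (p n)) (E F : forall n, set (aOmega (S n))) : Prop :=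
  forall delta : R, 0 < delta -> exists N0 : nat, forall n, (N0 <= n)%N ->
    (0 < aP (S n) (F n))%E ->
    `| fine (aP (S n) (E n `&` F n)) / fine (aP (S n) (F n)) - 1 | < delta.
Arguments cond_to_one {R p} S E F.
Arguments auxA {R p} S k w.
Arguments auxT {R p} S k w.

(* Main.v *)
From HB Require Import structures.
From mathcomp Require Import all_boot all_order all_algebra.
From mathcomp Require Import all_classical all_reals all_analysis.
Require Import Defs.
From mathcomp Require Import ring lra zify.
Import numFieldNormedType.Exports.
Import Order.TTheory GRing.Theory Num.Theory.
Local Open Scope classical_set_scope.
Local Open Scope ring_scope.
Set Implicit Arguments.
Unset Strict Implicit.
Unset Printing Implicit Defensive.

Section Det.
Variables (V : eqType) (o : V) (rule : seq (pstate V) -> nat).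

Definition qtype := (seq (V * nat) * seq ((V * nat) * nat * bool)
                     * seq ((V * nat) * nat * V * V))%type.

Definition qcat (a b : qtype) : qtype := (a.1.1 ++ b.1.1, a.1.2 ++ b.1.2, a.2 ++ b.2).

Section Inputs.
Variables (e : V -> nat) (Bf : V * nat -> nat -> bool) (Nf : V * nat -> nat -> V -> V).

Definition pstep (r : nat) (st : pstate V) : pstate V :=
  match ps_alive st with
  | [::] => st
  | a0 :: _ =>
    let x := nth a0 (ps_alive st) (r %% size (ps_alive st)) in
    let m := ps_used st x in
    let used' := fun y => if y == x then m.+1 else ps_used st y in
    if Bf x m then
      let w := Nf x m (ps_pos st x) in
      let pos' := fun y => if y == x then w else ps_pos st y in
      if w \in ps_visited st then PState (ps_alive st) used' pos' (ps_visited st)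
      else PState (ps_alive st ++ [seq (w, i) | i <- iota 0 (e w)])
                  used' pos' (w :: ps_visited st)
    else PState (rem x (ps_alive st)) used' (ps_pos st) (ps_visited st)
  end.

Definition pqstep (r : nat) (st : pstate V) : qtype :=
  match ps_alive st with
  | [::] => ([::], [::], [::])
  | a0 :: _ =>
    let x := nth a0 (ps_alive st) (r %% size (ps_alive st)) in
    let m := ps_used st x in
    if Bf x m then
      let w := Nf x m (ps_pos st x) in
      (if w \in ps_visited st then [::] else [:: (w, e w)],
       [:: (x, m, true)], [:: (x, m, ps_pos st x, w)])
    else ([::], [:: (x, m, false)], [::])
  end.

Lemma stepE H : step o e Bf Nf rule H = pstep (rule H) (last (st0 o e) H).
Proof. by []. Qed.

Definition hst k := hist o e Bf Nf rule k.
Definition sst k := state o e Bf Nf rule k.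

Lemma sstS k : sst k.+1 = pstep (rule (hst k)) (sst k).
Proof. by rewrite /sst /state /= last_rcons. Qed.

Lemma hstS k : hst k.+1 = rcons (hst k) (pstep (rule (hst k)) (sst k)).
Proof. by []. Qed.

Fixpoint queries k : qtype :=
  match k with
  | 0 => ([:: (o, e o)], [::], [::])
  | k'.+1 => qcat (queries k') (pqstep (rule (hst k')) (sst k'))
  end.

Definition sat (q : qtype) : bool :=
  [&& all (fun va => e va.1 == va.2) q.1.1,
      all (fun c => Bf c.1.1 c.1.2 == c.2) q.1.2 &
      all (fun n => Nf n.1.1.1 n.1.1.2 n.1.2 == n.2) q.2].

Lemma sat_qcat a b : sat (qcat a b) = sat a && sat b.
Proof.
rewrite /sat /qcat /= !all_cat.
by case: (all _ a.1.1); case: (all _ a.1.2); case: (all _ a.2);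
   case: (all _ b.1.1); case: (all _ b.1.2); case: (all _ b.2).
Qed.

Lemma sat_pqstep r st : sat (pqstep r st).
Proof.
rewrite /pqstep; case: (ps_alive st) => [|a0 l] //=.
set x := nth _ _ _.
case: ifP => hB /=; last by rewrite /sat /= hB.
by case: ifP => _; rewrite /sat /= hB !eqxx.
Qed.

Lemma sat_self k : sat (queries k).
Proof.
elim: k => [|k IH] /=; first by rewrite /sat /= eqxx.
by rewrite sat_qcat IH sat_pqstep.
Qed.

Definition inv (st : pstate V) (q : qtype) : Prop :=
  [/\ uniq (ps_alive st), (forall y, y \in ps_alive st -> y.1 \in ps_visited st),
      uniq (map fst q.1.2), (forall c, c \in q.1.2 -> c.1.2 < ps_used st c.1.1)%N
    & uniq (map fst q.2) /\ (forall n, n \in q.2 -> n.1.1.2 < ps_used st n.1.1.1)%N].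

Lemma inv_step r st q : inv st q -> inv (pstep r st) (qcat q (pqstep r st)).
Proof.
case=> ua av uc cu [un nu].
rewrite /pstep /pqstep.
case Ha: (ps_alive st) => [|a0 l].
  by split; rewrite ?Ha //= ?cats0 //; split; rewrite ?cats0.
rewrite -Ha.
set x := nth a0 _ _.
have xin : x \in ps_alive st.
  by rewrite /x mem_nth // ltn_pmod // Ha.
set m := ps_used st x.
have usedge : forall y, (ps_used st y <= (if y == x then m.+1 else ps_used st y))%N.
  by move=> y; case: eqP => [->|]. 
have notc : (x, m) \notin map fst q.1.2.
  apply/negP => /mapP [c cin ceq].
  by move: (cu c cin); rewrite -ceq /= ltnn.
have notn : forall v, (x, m, v) \notin map fst q.2.
  move=> v; apply/negP => /mapP [c cin ceq].
  by move: (nu c cin); rewrite -ceq /= ltnn.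
have cu' : forall b c, c \in q.1.2 ++ [:: (x, m, b)] ->
    (c.1.2 < (if c.1.1 == x then m.+1 else ps_used st c.1.1))%N.
  move=> b c; rewrite mem_cat => /orP [/cu h|]; first exact: leq_trans h (usedge _).
  by rewrite inE => /eqP -> /=; rewrite eqxx.
have uc' : forall b, uniq (map fst (q.1.2 ++ [:: (x, m, b)])).
  by move=> b; rewrite map_cat cat_uniq uc /= orbF andbT (negbTE notc).
case: ifP => hB /=.
  set w := Nf x m _.
  have nu' : forall n, n \in q.2 ++ [:: (x, m, ps_pos st x, w)] ->
      (n.1.1.2 < (if n.1.1.1 == x then m.+1 else ps_used st n.1.1.1))%N.
    move=> n; rewrite mem_cat => /orP [/nu h|]; first exact: leq_trans h (usedge _).
    by rewrite inE => /eqP -> /=; rewrite eqxx.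
  have un' : uniq (map fst (q.2 ++ [:: (x, m, ps_pos st x, w)])).
    by rewrite map_cat cat_uniq un /= orbF andbT (negbTE (notn _)).
  case: ifP => hw /=; rewrite /qcat /=.
    split => /=; [done|done|apply: uc'|apply: cu'|split; [apply: un'|apply: nu']].
  split => /=; [| | apply: uc' | apply: cu' | split; [apply: un' | apply: nu']].
  - rewrite cat_uniq ua /= map_inj_uniq ?iota_uniq ?andbT; last by move=> i j [].
    apply/hasPn => y /mapP [i _ ->]; apply/negP => /av /=; by rewrite hw.
  - move=> y; rewrite mem_cat inE => /orP [/av -> | /mapP [i _ ->]]; first by rewrite orbT.
    by rewrite eqxx.
rewrite /qcat /=; split => /=; [| | apply: uc' | apply: cu' | ].
- exact: rem_uniq ua.
- by move=> y /mem_rem /av.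
- by split; rewrite cats0 // => n /nu h; exact: leq_trans h (usedge _).
Qed.

Lemma inv_all k : inv (sst k) (queries k).
Proof.
elim: k => [|k IH].
  rewrite /sst /state /st0; split => //.
  - by rewrite [uniq _]map_inj_uniq ?iota_uniq // => i j [].
  - by move=> y /mapP [i _ ->]; rewrite inE.
by rewrite sstS /=; apply: inv_step.
Qed.

End Inputs.

Lemma hst_nil e Bf Nf k : hst e Bf Nf k <> [::].
Proof.
case: k => // k; rewrite /hst /=.
by move/(congr1 size); rewrite size_rcons.
Qed.

Lemma last_indep (T : Type) (x y : T) s : s <> [::] -> last x s = last y s.
Proof. by case: s. Qed.

Lemma step_det e Bf Nf e' Bf' Nf' r st :
  sat e' Bf' Nf' (pqstep e Bf Nf r st) ->
  pstep e' Bf' Nf' r st = pstep e Bf Nf r st /\ pqstep e' Bf' Nf' r st = pqstep e Bf Nf r st.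
Proof.
rewrite /pstep /pqstep; case: (ps_alive st) => [|a0 l] //.
set x := nth _ _ _.
case: ifP => hB.
  case: ifP => hw; rewrite /sat /= ?andbT.
    by case/andP => /eqP -> /eqP ->; rewrite hw.
  by case/and3P => /eqP he /eqP -> /eqP ->; rewrite hw he.
rewrite /sat /= !andbT => /eqP.
by case: (Bf' x _) => // _.
Qed.

Lemma determinacy e Bf Nf e' Bf' Nf' k :
  sat e' Bf' Nf' (queries e Bf Nf k) ->
  hst e' Bf' Nf' k = hst e Bf Nf k /\ queries e' Bf' Nf' k = queries e Bf Nf k.
Proof.
elim: k => [|k IH].
  rewrite /sat /= andbT => /andP [/eqP h _].
  by rewrite /hst /= /st0 h.
rewrite /= sat_qcat => /andP [/IH [hh hq] hs].
have hk : sst e' Bf' Nf' k = sst e Bf Nf k.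
  by rewrite /sst /state -/(hst e' Bf' Nf' k) -/(hst e Bf Nf k) hh;
     apply: last_indep; apply: hst_nil.
move: hs => /step_det [h1 h2].
change (hst e' Bf' Nf' k.+1 = hst e Bf Nf k.+1 /\ qcat (queries e' Bf' Nf' k) (pqstep e' Bf' Nf' (rule (hst e' Bf' Nf' k)) (sst e' Bf' Nf' k)) = qcat (queries e Bf Nf k) (pqstep e Bf Nf (rule (hst e Bf Nf k)) (sst e Bf Nf k))).
by rewrite !hstS hh hk h1 hq h2.
Qed.
End Det.

Section Count.
Variables (R : realType) (p : R) (S : aux_setup p).
Let V := aV S.

Definition stepv (v : V) (i : nat) : V := nth v (anbrs v) i.
Definition decv (l : seq nat) : V := foldl stepv (aroot S) l.

Lemma path_code (u : V) s : path (fun a b => b \in anbrs a) u s ->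
  exists l, foldl stepv u l = last u s.
Proof.
elim: s u => [|b s IH] u /=; first by exists [::].
case/andP => hb /IH [l hl]; exists (index b (anbrs u) :: l) => /=.
by rewrite /stepv nth_index.
Qed.

Lemma decv_surj (v : V) : exists l, decv l == v.
Proof.
have [s [hp hl]] := connected (aroot S) v.
move: hp => /path_code [l hl']; exists l; by rewrite /decv hl' hl.
Qed.

Definition encV (v : V) : nat := pickle (xchoose (decv_surj v)).

Lemma encV_inj : injective encV.
Proof.
move=> v w /(pcan_inj pickleK) h.
by rewrite -(eqP (xchooseP (decv_surj v))) -(eqP (xchooseP (decv_surj w))) h.
Qed.

Definition encq (q : qtype V) : nat :=
  pickle (map (fun va => (encV va.1, va.2)) q.1.1,
          map (fun c => (encV c.1.1.1, c.1.1.2, c.1.2, c.2)) q.1.2,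
          map (fun n => (encV n.1.1.1.1, n.1.1.1.2, n.1.1.2, encV n.1.2, encV n.2)) q.2).

Lemma encq_inj : injective encq.
Proof.
move=> [[a1 b1] c1] [[a2 b2] c2] /(pcan_inj pickleK) [ha hb hc].
have -> : a1 = a2.
  apply: inj_map ha => -[v i] [v' i'] [/encV_inj -> ->] //.
have -> : b1 = b2.
  apply: inj_map hb => -[[[v i] j] bb] [[[v' i'] j'] bb'] [/encV_inj -> -> -> ->] //.
have -> : c1 = c2.
  apply: inj_map hc => -[[[[v i] j] y] z] [[[[v' i'] j'] y'] z'] [/encV_inj -> -> -> /encV_inj -> /encV_inj ->] //.
by [].
Qed.
End Count.

Lemma In_mem (T : eqType) (x : T) (l : seq T) : List.In x l <-> x \in l.
Proof.
elim: l => [|y l IH] //=; rewrite inE; split.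
  by case=> [->|/IH ->]; rewrite ?eqxx ?orbT.
by case/orP => [/eqP ->|/IH]; [left|right].
Qed.

Lemma In_cat (T : Type) (x : T) (l1 l2 : seq T) :
  List.In x (l1 ++ l2) <-> List.In x l1 \/ List.In x l2.
Proof.
elim: l1 => [|y l IH] /=; first by split; [right|case].
rewrite IH; tauto.
Qed.

Lemma In_map (T U : Type) (f : T -> U) (y : U) (l : seq T) :
  List.In y (map f l) <-> exists x, List.In x l /\ f x = y.
Proof.
elim: l => [|x l IH] /=; first by split => //; case=> z [].
rewrite IH; split.
  case=> [<-|[z [hz <-]]]; first by exists x; split => //; left.
  by exists z; split => //; right.
case=> z [[<-|hz] <-]; first by left.
by right; exists z.
Qed.

Lemma NoDup_map_inj (T : eqType) (U : Type) (f : T -> U) (l : seq T) :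
  injective f -> uniq l -> List.NoDup (map f l).
Proof.
move=> fi; elim: l => [|x l IH] /=; first by constructor.
case/andP => hx /IH h; constructor => //.
case/In_map => y [/In_mem hy /fi e]; by move: hx; rewrite -e hy.
Qed.

Section Cyl.
Variables (R : realType) (p : R) (S : aux_setup p).
Local Notation V := (aV S).
Local Notation Om := (aOmega S).
Local Notation P := (aP S).

Definition pb (b : bool) : R := if b then p else 1 - p.
Definition coinset (cs : seq ((V * nat) * nat * bool)) : set Om :=
  [set w | all (fun c => aB c.1.1 c.1.2 w == c.2) cs].
Definition nset (ns : seq ((V * nat) * nat * V * V)) : set Om :=
  [set w | all (fun n => aN n.1.1.1 n.1.1.2 n.1.2 w == n.2) ns].
Definition cyl E cs ns := E `&` coinset cs `&` nset ns.
Definition etaform (E : set Om) := exists (Sv : seq V) (a : V -> nat),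
  E = [set w | forall v, v \in Sv -> aeta v w = a v].

Lemma etaform_meas E : etaform E -> measurable E.
Proof.
case=> Sv [a ->]; elim: Sv => [|v Sv IH].
  by rewrite (_ : [set _ | _] = setT) //; apply/seteqP; split.
rewrite (_ : [set _ | _] = [set w | aeta v w = a v] `&` [set w | forall v0, v0 \in Sv -> aeta v0 w = a v0]).
  by apply: measurableI => //; apply: eta_meas.
apply/seteqP; split => w /=.
  by move=> h; split => [|u hu]; apply: h; rewrite inE ?eqxx ?hu ?orbT.
by case=> h1 h2 u; rewrite inE => /orP [/eqP ->|/h2].
Qed.

Lemma coin_meas x m b : measurable [set w : Om | aB x m w == b].
Proof.
case: b.
  rewrite (_ : [set _ | _] = [set w | aB x m w]); first exact: B_meas.
  by apply/seteqP; split => w /=; rewrite eqb_id.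
rewrite (_ : [set _ | _] = ~` [set w | aB x m w]); first exact/measurableC/B_meas.
by apply/seteqP; split => w /=; rewrite eqbF_neg => /negP.
Qed.

Lemma nmeas x m v u : measurable [set w : Om | aN x m v w == u].
Proof.
rewrite (_ : [set _ | _] = [set w | aN x m v w = u]); first exact: N_meas.
by apply/seteqP; split => w /= /eqP.
Qed.

Lemma all_meas (T : Type) (f : T -> Om -> bool) (l : seq T) :
  (forall c, measurable [set w | f c w]) -> measurable [set w | all (f^~ w) l].
Proof.
move=> hf; elim: l => [|c l IH] /=.
  by rewrite (_ : [set _ | _] = setT) //; apply/seteqP; split.
rewrite (_ : [set _ | _] = [set w | f c w] `&` [set w | all (f^~ w) l]).
  exact: measurableI.
by apply/seteqP; split => w /=; [case/andP | case=> *; apply/andP].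
Qed.

Lemma cyl_meas E cs ns : etaform E -> measurable (cyl E cs ns).
Proof.
move=> hE; apply: measurableI; first apply: measurableI.
- exact: etaform_meas.
- by apply: (@all_meas _ (fun c w => aB c.1.1 c.1.2 w == c.2)) => c; apply: coin_meas.
- by apply: (@all_meas _ (fun n w => aN n.1.1.1 n.1.1.2 n.1.2 w == n.2)) => n; apply: nmeas.
Qed.

Lemma pb_law x m b : fine (P [set w | aB x m w = b]) = pb b.
Proof.
case: b => /=.
  by rewrite B_law.
rewrite (_ : [set _ | _] = ~` [set w | aB x m w]).
  by rewrite probability_setC ?B_law //; apply: B_meas.
by apply/seteqP; split => w /=; [move=> -> | case: (aB x m w)].
Qed.

Lemma cyl_prod E cs ns : etaform E -> uniq (map fst cs) -> uniq (map fst ns) ->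
  fine (P (cyl E cs ns)) = fine (P E) * \prod_(c <- cs) pb c.2 *
     \prod_(n <- ns) fine (P [set w | aN n.1.1.1 n.1.1.2 n.1.2 w = n.2]).
Proof.
move=> hE uc un.
pose L := (@CEta V, E) :: (map (fun c => (CB c.1.1 c.1.2, [set w : Om | aB c.1.1 c.1.2 w = c.2])) cs ++
   map (fun n => (CN n.1.1.1 n.1.1.2 n.1.2, [set w : Om | aN n.1.1.1 n.1.1.2 n.1.2 w = n.2])) ns).
have hnd : List.NoDup (map fst L).
  rewrite /L /= map_cat -!map_comp.
  have e1 : (fst \o (fun c : (V * nat) * nat * bool => (CB c.1.1 c.1.2, [set w : Om | aB c.1.1 c.1.2 w = c.2])))
     = (fun k => CB k.1 k.2) \o fst by [].
  have e2 : (fst \o (fun n : (V * nat) * nat * V * V => (CN n.1.1.1 n.1.1.2 n.1.2, [set w : Om | aN n.1.1.1 n.1.1.2 n.1.2 w = n.2])))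
     = (fun k => CN k.1.1 k.1.2 k.2) \o fst by [].
  rewrite e1 e2 !map_comp.
  constructor.
    by case/In_cat => /In_map [y [_ ]].
  elim: (map fst cs) uc => [|k l IH] /=.
    move=> _; apply: NoDup_map_inj => // -[[a b] c] [[a' b'] c'] [-> -> ->] //.
  case/andP => hk /IH h; constructor => //.
  case/In_cat => [/In_map [y [/In_mem hy [e3 e4]]] | /In_map [y [_ //]]].
  by move: hk; rewrite (_ : k = y) ?hy //; case: k y e3 e4 hy => a b [a' b'] /= -> ->.
have hev : forall x, List.In x L -> (fun c : comp V =>
    match c with
    | CEta => [set E | exists (S : seq V) (a : V -> nat),
                 E = [set w | forall v, v \in S -> aeta v w = a v]]
    | CB x m => [set E | exists b : bool, E = [set w | aB x m w = b]]
    | CN x m v => [set E | exists u : V, E = [set w | aN x m v w = u]]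
    end) x.1 x.2.
  move=> x /= [<- //|/In_cat [/In_map [c [_ <-]]|/In_map [n [_ <-]]]] /=.
    by exists c.2.
  by exists n.2.
have := inputs_indep hnd hev.
have -> : [set w | forall x, List.In x L -> x.2 w] = cyl E cs ns.
  apply/seteqP; split => w /=.
    move=> h; split; first split.
    - by apply: (h (CEta, E)); left.
    - apply/allP => c /In_mem hc; apply/eqP.
      apply: (h (CB c.1.1 c.1.2, [set w | aB c.1.1 c.1.2 w = c.2])); right.
      by apply/In_cat; left; apply/In_map; exists c.
    - apply/allP => n /In_mem hn; apply/eqP.
      apply: (h (CN n.1.1.1 n.1.1.2 n.1.2, [set w | aN n.1.1.1 n.1.1.2 n.1.2 w = n.2])); right.
      by apply/In_cat; right; apply/In_map; exists n.
  case=> [[hw /allP hc] /allP hn] x [<- //|/In_cat [/In_map [c [/In_mem hc' <-]]|/In_map [n [/In_mem hn' <-]]]] /=.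
    exact/eqP/hc.
  exact/eqP/hn.
move=> ->; rewrite /L big_cons big_cat /= !big_map -mulrA; congr (_ * _); congr (_ * _).
by apply: eq_bigr => c _; rewrite pb_law.
Qed.

End Cyl.

Local Open Scope ereal_scope.

Section Rem.
Variable R : realType.

Lemma rem_eq (f : nat -> bool) u j : f (u + j)%N = false ->
  (forall i, (i < j)%N -> f (u + i)%N = true) -> rem_life R f u = (j%:R)%:E.
Proof.
move=> hj hi; apply/le_anti/andP; split.
  by apply: ereal_inf_lbound; exists j.
apply/ereal_infP => _ [i /= hfi <-]; rewrite lee_fin ler_nat.
by rewrite leqNgt; apply/negP => /hi; rewrite hfi.
Qed.

Lemma rem_ge0 (f : nat -> bool) u : 0 <= rem_life R f u.
Proof. by apply/ereal_infP => _ [i _ <-]; rewrite lee_fin. Qed.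

Lemma rem_cases (f : nat -> bool) u :
  (exists j, [/\ f (u + j)%N = false, (forall i, (i < j)%N -> f (u + i)%N = true)
      & rem_life R f u = (j%:R)%:E]) \/ rem_life R f u = +oo.
Proof.
case: (pselect (exists j, ~~ f (u + j)%N)) => [ex|nex].
  left; case: (ex_minnP ex) => j hj hmin; exists j.
  have hj' : f (u + j)%N = false by apply/negbTE.
  have hi : forall i, (i < j)%N -> f (u + i)%N = true.
    move=> i hij; apply/negPn/negP => /hmin; by rewrite leqNgt hij.
  by split => //; apply: rem_eq.
right; rewrite /rem_life (_ : [set _ | _ in _] = set0) ?ereal_inf0 //.
apply/seteqP; split => // _ [j /= hj _]; apply: nex; exists j; by rewrite hj.
Qed.

Lemma rem_fin_pattern (f : nat -> bool) u j : rem_life R f u = (j%:R)%:E ->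
  f (u + j)%N = false /\ (forall i, (i < j)%N -> f (u + i)%N = true).
Proof.
case: (rem_cases f u) => [[j' [h1 h2 ->]] | ->] // /eqP; rewrite eqe eqr_nat => /eqP <-.
by [].
Qed.
End Rem.

Section TLemma.
Variables (R : realType) (p : R) (S : aux_setup p).
Local Notation V := (aV S).
Local Notation Om := (aOmega S).
Local Notation P := (aP S).
Local Notation cset := (@coinset R p S).

Definition Tsum (s : seq (V * nat)) (u : V * nat -> nat) (w : Om) : \bar R :=
  \sum_(x <- s) rem_life R (fun m => aB x m w) (u x).
Definition Tle s u (t : nat) := [set w | Tsum s u w <= (t%:R)%:E].
Definition pattern (x : V * nat) (u : V * nat -> nat) (j : nat) : seq ((V * nat) * nat * bool) :=
  [seq (x, (u x + i)%N, true) | i <- iota 0 j] ++ [:: (x, (u x + j)%N, false)].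
Fixpoint G (a t : nat) : R :=
  if a is a'.+1 then (\sum_(j < t.+1) p ^+ j * (1 - p) * G a' (t - j))%R else 1%R.

Lemma Tsum_ge0 s u w : 0 <= Tsum s u w.
Proof. by apply: sume_ge0 => x _; apply: rem_ge0. Qed.

Lemma coinset_cat cs cs' : cset (cs ++ cs') = cset cs `&` cset cs'.
Proof. by apply/seteqP; split => w /=; rewrite /coinset /= all_cat => /andP. Qed.

Lemma cyl_cat E cs cs' ns : cyl E (cs ++ cs') ns = cyl E cs ns `&` cset cs'.
Proof.
rewrite /cyl coinset_cat; apply/seteqP; split => w /=; tauto.
Qed.

Lemma pattern_coinset w x u j :
  cset (pattern x u j) w <-> rem_life R (fun m => aB x m w) (u x) = (j%:R)%:E.
Proof.
split.
  rewrite /coinset /pattern /= all_cat /= andbT => /andP [/allP h1 /eqP h2].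
  apply: rem_eq => // i hi; apply/eqP; have := h1 (x, (u x + i)%N, true).
  by rewrite /= => -> //; apply/mapP; exists i; rewrite // mem_iota.
move/rem_fin_pattern => [h1 h2].
rewrite /coinset /pattern /= all_cat /= andbT h1 eqxx andbT.
by apply/allP => c /mapP [i]; rewrite mem_iota => /andP [_ hi] -> /=; rewrite h2.
Qed.

Lemma prod_pattern x u j : (\prod_(c <- pattern x u j) pb p c.2 = p ^+ j * (1 - p))%R.
Proof.
rewrite /pattern big_cat big_map /= big_cons big_nil mulr1.
by rewrite (_ : iota 0 j = index_iota 0 j) ?prodr_const_nat ?subn0 // /index_iota subn0.
Qed.

Lemma cyl_ext E cs cs' ns : etaform E -> uniq (map fst (cs ++ cs')) -> uniq (map fst ns) ->
  fine (P (cyl E (cs ++ cs') ns)) = (fine (P (cyl E cs ns)) * \prod_(c <- cs') pb p c.2)%R.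
Proof.
move=> hE hu hn; rewrite !cyl_prod //; last by move: hu; rewrite map_cat cat_uniq => /andP [].
by rewrite big_cat /= -!mulrA; congr (_ * _)%R; congr (_ * _)%R; exact: mulrC.
Qed.

Lemma fineP E cs ns : etaform E -> P (cyl E cs ns) = (fine (P (cyl E cs ns)))%:E.
Proof. by move=> hE; rewrite fineK // fin_num_measure //; apply: cyl_meas. Qed.

Lemma pattern_keys_uniq x u j cs :
  uniq (map fst cs) -> (forall c, c \in cs -> c.1.1 = x -> (c.1.2 < u x)%N) ->
  uniq (map fst (cs ++ pattern x u j)).
Proof.
move=> uc hc.
have e : map fst (pattern x u j) = map (fun i => (x, (u x + i)%N)) (iota 0 j.+1).
  by rewrite /pattern map_cat -map_comp -addn1 iotaD map_cat /=.
rewrite map_cat cat_uniq uc e.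
rewrite map_inj_uniq; last by move=> i i' [/addnI].
rewrite iota_uniq andbT andTb; apply/hasPn => k /mapP [i _ ->]; apply/negP => /mapP [c hc' ce].
by move: (hc c hc'); rewrite -ce /= => /(_ erefl); rewrite ltnNge leq_addr.
Qed.

Lemma T_lemma s u E cs ns t : etaform E -> uniq s -> uniq (map fst cs) -> uniq (map fst ns) ->
  (forall c, c \in cs -> c.1.1 \in s -> (c.1.2 < u c.1.1)%N) ->
  measurable (cyl E cs ns `&` Tle s u t) /\
  P (cyl E cs ns `&` Tle s u t) = (fine (P (cyl E cs ns)) * G (size s) t)%:E.
Proof.
move=> hE; elim: s cs t => [|x s IH] cs t us uc un hc.
  have -> : cyl E cs ns `&` Tle [::] u t = cyl E cs ns.
    apply/seteqP; split => w /=; first by case.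
    by move=> h; split => //; rewrite /Tle /Tsum /= big_nil lee_fin.
  by split; [apply: cyl_meas | rewrite /= mulr1 -fineP].
move: us => /= /andP [xs us].
pose F (j : nat) := cyl E (cs ++ pattern x u j) ns `&` Tle s u (t - j).
have IHj : forall j, measurable (F j) /\ P (F j) = (fine (P (cyl E (cs ++ pattern x u j) ns)) * G (size s) (t - j))%:E.
  move=> j; apply: IH => //.
  - by apply: pattern_keys_uniq => // c hcs hx; rewrite -hx; apply: hc => //; rewrite hx inE eqxx.
  - move=> c; rewrite mem_cat => /orP [hcs hcx|].
      by apply: hc => //; rewrite inE hcx orbT.
    rewrite /pattern mem_cat => /orP [/mapP [i _ ->]|]; last rewrite inE => /eqP ->;
    by move=> /= hx; move: xs; rewrite hx.
have eqU : cyl E cs ns `&` Tle (x :: s) u t = \big[setU/set0]_(j < t.+1) F j.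
  rewrite -bigcup_mkord; apply/seteqP; split => w /=.
    case=> hcyl; rewrite /Tle /Tsum /= big_cons -/(Tsum s u w).
    have hT := Tsum_ge0 s u w.
    case: (rem_cases R (fun m => aB x m w) (u x)) => [[j [h1 h2 hr]]|->]; last first.
      by rewrite addye ?leye_eq //; apply/negP => /eqP h; move: hT; rewrite h.
    rewrite hr; move: hT; case hTs: (Tsum s u w) => [r| |] // hr0.
    rewrite -EFinD lee_fin => hjr.
    have jt : (j <= t)%N.
      by rewrite -(ler_nat R); rewrite lee_fin in hr0; lra.
    exists j => //; split.
      by rewrite cyl_cat; split => //; apply/pattern_coinset.
    by rewrite /Tle /= hTs lee_fin natrB //; rewrite lee_fin in hr0; lra.
  case=> j /= jt [hcyl hT]; rewrite cyl_cat in hcyl; case: hcyl => hcyl /pattern_coinset hr.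
  split => //; rewrite /Tle /Tsum /= big_cons -/(Tsum s u w) hr.
  move: hT (Tsum_ge0 s u w); rewrite /Tle /=; case: (Tsum s u w) => [r| |] //.
  rewrite !lee_fin natrB // => h1 h2; lra.
rewrite eqU; split.
  by apply: bigsetU_measurable => j _; case: (IHj j).
rewrite (measure_bigsetU_ord P xpredT (F := fun j : 'I_t.+1 => F j)).
- rewrite (eq_bigr (fun j : 'I_t.+1 => ((fine (P (cyl E cs ns)) * (p ^+ j * (1 - p) * G (size s) (t - j)))%:E))); last first.
    move=> j _ /=; rewrite (proj2 (IHj j)) cyl_ext ?prod_pattern ?mulrA //.
    by apply: pattern_keys_uniq => // c hcs hx; rewrite -hx; apply: hc => //; rewrite hx inE eqxx.
  by rewrite sumEFin /= mulr_sumr.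
- by move=> j; case: (IHj j).
- move=> i j _ _ [w [[hi _] [hj _]]].
  move: hi hj; rewrite /F !cyl_cat => -[_ hi] [_ hj].
  move: hi hj => /pattern_coinset hi /pattern_coinset hj.
  by apply: val_inj => /=; move: hi; rewrite hj => -[] /eqP; rewrite eqr_nat => /eqP.
Qed.
End TLemma.

Local Close Scope ereal_scope.

Section Link.
Variables (R : realType) (p : R) (S : aux_setup p) (k : nat).
Local Notation V := (aV S).
Local Notation Om := (aOmega S).
Local Notation P := (aP S).

Definition eo (w : Om) := fun v => aeta v w.
Definition Bo (w : Om) := fun x m => aB x m w.
Definition No (w : Om) := fun x m v => aN x m v w.

Definition Qk (w : Om) := queries (aroot S) (@arule _ _ S) (eo w) (Bo w) (No w) k.

Lemma aux_stateE w : @aux_state _ _ S k w = sst (aroot S) (@arule _ _ S) (eo w) (Bo w) (No w) k.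
Proof. by []. Qed.

Definition etaE (w0 : Om) : set Om :=
  [set w | forall v, v \in map fst (Qk w0).1.1 -> aeta v w = aeta v w0].

Definition cylQ (w0 : Om) := cyl (etaE w0) (Qk w0).1.2 (Qk w0).2.

Lemma etaE_form w0 : etaform (etaE w0).
Proof. by exists (map fst (Qk w0).1.1), (fun v => aeta v w0). Qed.

Lemma cylQ_sat w0 w : cylQ w0 w -> sat (eo w) (Bo w) (No w) (Qk w0).
Proof.
case=> [[he hc] hn]; have := sat_self (aroot S) (@arule _ _ S) (eo w0) (Bo w0) (No w0) k.
rewrite /sat -/(Qk w0) => /and3P [h1 _ _]; apply/and3P; split => //.
apply/allP => va hva; rewrite /eo he; last by apply/mapP; exists va.
by move/allP: h1 => /(_ va hva).
Qed.

Lemma sat_cylQ w0 w : sat (eo w) (Bo w) (No w) (Qk w0) -> cylQ w0 w.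
Proof.
have := sat_self (aroot S) (@arule _ _ S) (eo w0) (Bo w0) (No w0) k.
rewrite /sat -/(Qk w0) => /and3P [h1 _ _] /and3P [h1' h2 h3]; split; last exact: h3.
split; last exact: h2.
move=> v /mapP [va hva ->]; move/allP: h1 => /(_ va hva) /eqP h.
move/allP: h1' => /(_ va hva) /eqP h'; by move: h h'; rewrite /eo => -> ->.
Qed.

Lemma piece_eq w0 : [set w | Qk w = Qk w0] = cylQ w0.
Proof.
apply/seteqP; split => w /=.
  move=> h; apply: sat_cylQ; rewrite -h; exact: sat_self.
move/cylQ_sat => hs.
by rewrite /Qk; have [_ ->] := determinacy hs.
Qed.

Lemma cylQ_state w0 w : cylQ w0 w -> @aux_state _ _ S k w = @aux_state _ _ S k w0.
Proof.
move/cylQ_sat => hs; have [hh _] := determinacy hs.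
rewrite !aux_stateE /sst /state -/(hst _ _ _ _ _ _) hh.
by apply: last_indep; apply: hst_nil.
Qed.

Definition pieceS (i : nat) := [set w : Om | @encq _ _ S (Qk w) = i].

Lemma piece_cyl i w0 : pieceS i w0 -> pieceS i = cylQ w0.
Proof.
move=> h0; rewrite -piece_eq; apply/seteqP; split => w /=.
  by rewrite -h0 => /encq_inj.
by move=> e; rewrite -h0; exact: (congr1 (@encq _ _ S) e).
Qed.

Lemma piece_cases i : pieceS i = set0 \/ exists w0, pieceS i = cylQ w0.
Proof.
case: (pselect (exists w0, pieceS i w0)) => [[w0 h]|h].
  by right; exists w0; apply: piece_cyl.
by left; apply/seteqP; split => w // hw; apply: h; exists w.
Qed.

Lemma cylQ_T w0 t :
  let st := @aux_state _ _ S k w0 in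
  cylQ w0 `&` [set w | (auxT S k w <= (t%:R)%:E)%E] = cylQ w0 `&` Tle (ps_alive st) (ps_used st) t.
Proof.
move=> st; apply/seteqP; split => w /= [hc h]; split => //; move: h;
  by rewrite /auxT /Tle /Tsum /= (cylQ_state hc).
Qed.

Lemma cylQ_Tlemma w0 t :
  let st := @aux_state _ _ S k w0 in
  measurable (cylQ w0 `&` [set w | (auxT S k w <= (t%:R)%:E)%E]) /\
  P (cylQ w0 `&` [set w | (auxT S k w <= (t%:R)%:E)%E]) =
    (fine (P (cylQ w0)) * G p (auxA S k w0) t)%:E.
Proof.
move=> st; rewrite cylQ_T.
have [ua av uc cu [un nu]] := inv_all (aroot S) (@arule _ _ S) (eo w0) (Bo w0) (No w0) k.
apply: T_lemma => //; first exact: etaE_form.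
by move=> c hc _; apply: cu.
Qed.
End Link.

Section Assembly.
Variables (R : realType) (p : R) (S : aux_setup p) (k : nat).
Local Notation V := (aV S).
Local Notation Om := (aOmega S).
Local Notation P := (aP S).
Local Notation piece := (@pieceS R p S k).
Local Notation cQ := (@cylQ R p S k).

Lemma cover (X : set Om) : X = \bigcup_(i in [set: nat]) (piece i `&` X).
Proof.
apply/seteqP; split => w /=; last by case=> i _ [].
by move=> h; exists (@encq _ _ S (Qk k w)).
Qed.

Lemma triv_piece (X : set Om) : trivIset [set: nat] (fun i => piece i `&` X).
Proof. by move=> i j _ _ [w [[/= <- _] [/= <- _]]]. Qed.

Lemma cylQ_meas w0 : measurable (cQ w0).
Proof. apply: cyl_meas; exact: etaE_form. Qed.

Lemma cylQ_A w0 w : cQ w0 w -> auxA S k w = auxA S k w0.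
Proof. by move=> h; rewrite /auxA (cylQ_state h). Qed.

Lemma piece_F (Fp : nat -> bool) i :
  (piece i `&` [set w | Fp (auxA S k w)] = set0) \/
  (exists w0, piece i `&` [set w | Fp (auxA S k w)] = cQ w0 /\ Fp (auxA S k w0)).
Proof.
case: (piece_cases S k i) => [->|[w0 ->]]; first by left; rewrite set0I.
case hF: (Fp (auxA S k w0)).
  right; exists w0; split => //; apply/seteqP; split => w /=; first by case.
  by move=> h; split => //; rewrite (cylQ_A h).
left; apply/seteqP; split => w //= [h]; by rewrite (cylQ_A h) hF.
Qed.

Lemma assembly (Fp : nat -> bool) (t : nat) (b : bool) (d' : R) :
  (0 <= d')%R ->
  (forall a, Fp a -> (if b then 1 - G p a t else G p a t) <= d')%R ->
  let F := [set w | Fp (auxA S k w)] in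
  let Bad := if b then ~` [set w | (auxT S k w <= (t%:R)%:E)%E]
             else [set w | (auxT S k w <= (t%:R)%:E)%E] in
  [/\ measurable F, measurable (F `&` Bad) & (P (F `&` Bad) <= d'%:E * P F)%E].
Proof.
move=> d0 hd F Bad.
have hT := @cylQ_Tlemma _ _ S k.
have mpF : forall i, measurable (piece i `&` F).
  move=> i; case: (piece_F Fp i) => [->|[w0 [-> _]]] //; exact: cylQ_meas.
have mpB : forall i, measurable (piece i `&` (F `&` Bad)) /\
    (P (piece i `&` (F `&` Bad)) <= d'%:E * P (piece i `&` F))%E.
  move=> i; rewrite setIA; case: (piece_F Fp i) => [->|[w0 [-> hFw]]].
    by rewrite set0I measure0; split => //; rewrite mule_ge0 // lee_fin.
  have [m1 e1] := hT w0 t.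
  have fe : P (cQ w0) = (fine (P (cQ w0)))%:E.
    by rewrite fineK // fin_num_measure //; apply: cylQ_meas.
  have hG := hd _ hFw.
  rewrite /Bad; move: hG; clear hd Bad; case: b => hG.
    have -> : cQ w0 `&` ~` [set w | (auxT S k w <= (t%:R)%:E)%E] =
        cQ w0 `\` (cQ w0 `&` [set w | (auxT S k w <= (t%:R)%:E)%E]).
      by apply/seteqP; split => w /=; [case=> h1 h2; split => // -[] | case=> h1 h2; split => // h3; apply: h2].
    split; first by apply: measurableD => //; apply: cylQ_meas.
    rewrite measureD //; last 2 first.
    - exact: cylQ_meas.
    - by rewrite -ge0_fin_numE ?measure_ge0 // fin_num_measure //; apply: cylQ_meas.
    change (P (cQ w0) - P (cQ w0 `&` (cQ w0 `&` [set w | (auxT S k w <= (t%:R)%:E)%E])) <= d'%:E * P (cQ w0))%E.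
    rewrite setIA setIid e1 fe -EFinB -EFinM lee_fin.
    have f0 : (0 <= fine (P (cQ w0)))%R by rewrite fine_ge0 // measure_ge0.
    have := ler_wpM2l f0 hG; lra.
  split => //; rewrite e1 fe -EFinM lee_fin.
  have f0 : (0 <= fine (P (cQ w0)))%R by rewrite fine_ge0 // measure_ge0.
  by rewrite mulrC ler_wpM2r.
have mF : measurable F.
  by rewrite (cover F); apply: bigcup_measurable => i _; apply: mpF.
have mFB : measurable (F `&` Bad).
  by rewrite (cover (F `&` Bad)); apply: bigcup_measurable => i _; case: (mpB i).
split => //.
rewrite [in X in (X <= _)%E](cover (F `&` Bad)) [in X in (_ <= _ * X)%E](cover F).
rewrite !measure_bigcup //; try (by move=> i _; case: (mpB i)); try (by apply: triv_piece).
rewrite -nneseriesZl; last by move=> i _; apply: measure_ge0.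
by apply: lee_nneseries => [i _ _|i _]; [apply: measure_ge0 | case: (mpB i)].
Qed.
End Assembly.

Section GBounds.
Variables (R : realType) (p : R).
Hypothesis p0 : 0 <= p.
Hypothesis p1 : p <= 1.

Lemma geo (y : R) n : (1 - y) * \sum_(j < n) y ^+ j = 1 - y ^+ n.
Proof.
have := subrX1 y n; move=> h.
have -> : 1 - y ^+ n = - (y ^+ n - 1) by ring.
by rewrite h; ring.
Qed.

Lemma sum_ge0 (y : R) n : 0 <= y -> 0 <= \sum_(j < n) y ^+ j.
Proof. by move=> y0; apply: sumr_ge0 => j _; apply: exprn_ge0. Qed.

Lemma sumGp t : \sum_(j < t.+1) p ^+ j * (1 - p) = 1 - p ^+ t.+1.
Proof. by rewrite -mulr_suml mulrC geo. Qed.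

Lemma G_low (z M : R) a t : 0 <= z <= 1 -> 0 <= M -> 1 - p <= M * (1 - p * z) ->
  G p a t * z ^+ t <= M ^+ a.
Proof.
move=> /andP [z0 z1] M0 hM; elim: a t => [|a IH] t /=.
  by rewrite mul1r expr0 exprn_ile1.
rewrite mulr_suml.
apply: (@le_trans _ _ (\sum_(j < t.+1) (1 - p) * (p * z) ^+ j * M ^+ a)).
  apply: ler_sum => j _.
  have jt : (j <= t)%N by rewrite -ltnS.
  have -> : z ^+ t = z ^+ j * z ^+ (t - j) by rewrite -exprD subnKC.
  have -> : p ^+ j * (1 - p) * G p a (t - j) * (z ^+ j * z ^+ (t - j)) =
    (1 - p) * (p * z) ^+ j * (G p a (t - j) * z ^+ (t - j)) by rewrite exprMn; ring.
  apply: ler_wpM2l; last exact: IH.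
  by apply: mulr_ge0; [rewrite subr_ge0 | apply: exprn_ge0; apply: mulr_ge0].
rewrite -mulr_suml -mulr_sumr exprS.
have hs := sum_ge0 t.+1 (mulr_ge0 p0 z0).
have hg := geo (p * z) t.+1.
have hy : 0 <= (p * z) ^+ t.+1 by apply: exprn_ge0; apply: mulr_ge0.
have Ma : 0 <= M ^+ a by apply: exprn_ge0.
have h0 := ler_wpM2r hs hM; rewrite -mulrA hg in h0.
have h1 : (1 - p) * \sum_(j < t.+1) (p * z) ^+ j <= M.
  apply: (le_trans h0); have := mulr_ge0 M0 hy; lra.
move: (ler_wpM2r Ma h1) => hh; exact: hh.
Qed.

Lemma subr_ge0_helper (x : R) : 1 <= x -> 0 <= x - 1.
Proof. by rewrite subr_ge0. Qed.

Lemma G_up (z M : R) a t : 0 <= z -> 1 <= M -> 1 - p <= M * (1 - p * z) ->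
  (1 - G p a t) * z ^+ t.+1 <= M ^+ a.
Proof.
move=> z0 M1 hM; elim: a t => [|a IH] t /=.
  by rewrite subrr mul0r expr0.
have e : 1 - \sum_(j < t.+1) p ^+ j * (1 - p) * G p a (t - j) =
    p ^+ t.+1 + \sum_(j < t.+1) p ^+ j * (1 - p) * (1 - G p a (t - j)).
  rewrite [X in _ = _ + X](eq_bigr (fun j : 'I_t.+1 => p ^+ j * (1 - p) - p ^+ j * (1 - p) * G p a (t - j))); last by move=> j _; ring.
  rewrite sumrB sumGp; ring.
rewrite e mulrDl mulr_suml -exprMn.
apply: (@le_trans _ _ ((p * z) ^+ t.+1 + \sum_(j < t.+1) (1 - p) * (p * z) ^+ j * M ^+ a)).
  apply: lerD => //; apply: ler_sum => j _.
  have jt : (j <= t)%N by rewrite -ltnS.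
  have -> : z ^+ t.+1 = z ^+ j * z ^+ (t - j).+1 by rewrite -exprD -subSn // subnKC // ltnW.
  have -> : p ^+ j * (1 - p) * (1 - G p a (t - j)) * (z ^+ j * z ^+ (t - j).+1) =
    (1 - p) * (p * z) ^+ j * ((1 - G p a (t - j)) * z ^+ (t - j).+1) by rewrite exprMn; ring.
  apply: ler_wpM2l; last exact: IH.
  by apply: mulr_ge0; [rewrite subr_ge0 | apply: exprn_ge0; apply: mulr_ge0].
rewrite -mulr_suml -mulr_sumr [M ^+ a.+1]exprS.
have hs := sum_ge0 t.+1 (mulr_ge0 p0 z0).
have hg := geo (p * z) t.+1.
have hy : 0 <= (p * z) ^+ t.+1 by apply: exprn_ge0; apply: mulr_ge0.
have Ma : 1 <= M ^+ a by apply: exprn_ege1.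
have h1 := ler_wpM2r hs hM; rewrite -mulrA hg in h1.
have h2 : M ^+ a * ((1 - p) * \sum_(j < t.+1) (p * z) ^+ j) <= M ^+ a * (M * (1 - (p * z) ^+ t.+1)).
  by apply: ler_wpM2l => //; lra.
have MM : 1 <= M * M ^+ a by nra.
have := mulr_ge0 (subr_ge0_helper MM) hy.
nra.
Qed.
End GBounds.

Section Bounds.
Variable R : realType.
Implicit Types (x y a b u z : R).

Lemma subr_ge0_helper' a b : a <= b -> 0 <= b - a.
Proof. by rewrite subr_ge0. Qed.

Lemma inv_le a b : 0 < a -> 1 <= a * b -> a^-1 <= b.
Proof. by move=> a0 h; rewrite -[a^-1]mulr1 ler_pdivrMl. Qed.

Lemma E1 x : 0 <= x <= 1/2 -> (1 - x)^-1 <= expR (x + 2 * x ^+ 2).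
Proof.
move=> /andP [x0 x1]; apply: le_trans (expR_ge1Dx _).
apply: inv_le; first lra.
have h : 0 <= x ^+ 2 * (1 - 2 * x) by apply: mulr_ge0; [apply: sqr_ge0|lra].
rewrite expr2 in h *; nra.
Qed.

Lemma E2 x : 0 <= x <= 1 -> expR (x * (1 - x)) <= 1 + x.
Proof.
move=> /andP [x0 x1].
set y := x * (1 - x).
have y0 : 0 <= y by rewrite /y; apply: mulr_ge0; lra.
have h := expR_ge1Dx (- y).
have e := expRxMexpNx_1 y.
have E0 := expR_gt0 y.
have h1 : expR y * (1 - y) <= 1.
  rewrite -e; apply: ler_wpM2l; [exact: ltW | lra].
have h2 : 1 <= (1 - y) * (1 + x).
  have : 0 <= x * x * x by apply: mulr_ge0 => //; apply: mulr_ge0.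
  rewrite /y; nra.
have h3 : expR y <= expR y * ((1 - y) * (1 + x)).
  by rewrite -{1}[expR y]mulr1; apply: ler_wpM2l => //; exact: ltW.
apply: (le_trans h3); rewrite mulrA.
have : 0 <= 1 + x by lra.
nra.
Qed.

Lemma E3 u : 0 <= u <= 1 -> (1 + u)^-1 <= expR (- (u * (1 - u))).
Proof.
move=> /andP [u0 u1]; apply: le_trans (expR_ge1Dx _).
apply: inv_le; first lra.
have : 0 <= u * u * u by apply: mulr_ge0 => //; apply: mulr_ge0.
nra.
Qed.

Lemma frac_le a a' b b' : 0 <= a -> a <= a' -> 0 < b' -> b' <= b -> a / b <= a' / b'.
Proof.
move=> a0 aa b0 bb.
have b0' : 0 < b by apply: lt_le_trans bb.
apply: (@le_trans _ _ (a' / b)).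
  by apply: ler_wpM2r => //; rewrite invr_ge0 ltW.
apply: ler_wpM2l; first exact: le_trans aa.
by rewrite lef_pV2 // posrE.
Qed.

Lemma expR_nat_le y (n : nat) z : 0 <= z -> expR y <= z -> expR (n%:R * y) <= z ^+ n.
Proof.
move=> z0 h; rewrite expRM_natl; apply: lerXn2r => //; rewrite nnegrE //.
Qed.

Lemma expR_nat_ge y (n : nat) z : 0 <= z -> z <= expR y -> z ^+ n <= expR (n%:R * y).
Proof.
move=> z0 h; rewrite expRM_natl; apply: lerXn2r => //; rewrite nnegrE //.
Qed.

Lemma bound_i (p eps b : R) (n a t : nat) :
  0 < p < 1 -> 0 < eps <= 1 -> 0 < b ->
  a%:R <= (1 - eps) * b * n%:R ->
  (1 - eps / 2) * b * n%:R * (1 - p)^-1 <= t.+1%:R ->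
  1 - G p a t <= expR (- (b * (eps / 12) * eps / 4) * n%:R).
Proof.
move=> /andP [p0 p1] /andP [e0 e1] b0 ha ht.
set th := eps / 12.
have th0 : 0 < th by rewrite /th; lra.
have th1 : th <= 1 / 12 by rewrite /th; lra.
set x := th * (1 - p).
have x0 : 0 <= x by rewrite /x; apply: mulr_ge0; lra.
have xth : x <= th by rewrite /x; nra.
set M := (1 - th)^-1.
have M1 : 1 <= M by rewrite /M invf_ge1; lra.
have hM : 1 - p <= M * (1 - p * (1 + x)).
  rewrite /M mulrC ler_pdivlMr; last lra.
  rewrite /x; have : 0 <= th * (1 - p) * (1 - p) by apply: mulr_ge0; [apply: mulr_ge0|]; lra.
  nra.
have hG := G_up (ltW p0) (ltW p1) a t (z := 1 + x) (M := M) (ltac:(lra)) M1 hM.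
have zt0 : 0 < (1 + x) ^+ t.+1 by apply: exprn_gt0; lra.
have h1 : 1 - G p a t <= M ^+ a / (1 + x) ^+ t.+1 by rewrite ler_pdivlMr.
apply: (le_trans h1).
have hMe : M <= expR (th + 2 * th ^+ 2) by apply: E1; lra.
have hMa := expR_nat_ge a (ltW (lt_le_trans ltr01 M1)) hMe.
have hze : expR (x * (1 - x)) <= 1 + x by apply: E2; lra.
have hza := expR_nat_le t.+1 (ltac:(lra) : 0 <= 1 + x) hze.
apply: (le_trans (frac_le _ hMa (expR_gt0 _) hza)).
  by apply: exprn_ge0; lra.
rewrite -expRB ler_expR.
have c0 : 0 <= (1 - eps / 2) * b * n%:R * (1 - p)^-1.
  apply: mulr_ge0; last by rewrite invr_ge0; lra.
  by apply: mulr_ge0; [apply: mulr_ge0; lra|apply: ler0n].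
have cx : (1 - eps / 2) * b * n%:R * (1 - p)^-1 * x = (1 - eps / 2) * b * n%:R * th.
  by rewrite /x; field; lra.
have xx : x * (1 - th) <= x * (1 - x) by apply: ler_wpM2l; lra.
have hB : (1 - eps / 2) * b * n%:R * th * (1 - th) <= t.+1%:R * (x * (1 - x)).
  rewrite -cx -mulrA; apply: (le_trans (ler_wpM2l c0 xx)).
  by apply: ler_wpM2r => //; apply: mulr_ge0; lra.
have hA : a%:R * (th + 2 * th ^+ 2) <= (1 - eps) * b * n%:R * (th + 2 * th ^+ 2).
  by apply: ler_wpM2r => //; rewrite expr2; nra.
have n0 : 0 <= n%:R :> R by [].
have key : (1 - eps) * b * n%:R * (th + 2 * th ^+ 2) - (1 - eps / 2) * b * n%:R * th * (1 - th)
   + b * th * eps / 4 * n%:R = - (5 / 24) * (b * n%:R * th * eps ^+ 2).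
  by rewrite /th; field.
have : 0 <= b * n%:R * th * eps ^+ 2.
  by apply: mulr_ge0; [apply: mulr_ge0; [apply: mulr_ge0|]|apply: sqr_ge0]; lra.
lra.
Qed.

Lemma bound_ii (p eps b : R) (n a t : nat) :
  0 < p < 1 -> 0 < eps -> 0 < b ->
  1 - eps / (8 * (1 + eps)) <= p ->
  (1 + eps) * b * n%:R <= a%:R ->
  t%:R <= (1 + eps / 2) * b * n%:R * (1 - p)^-1 ->
  G p a t <= expR (- (b * (eps / (12 * (1 + eps))) * eps / 8) * n%:R).
Proof.
move=> /andP [p0 p1] e0 b0 hp ha ht.
set th := eps / (12 * (1 + eps)).
set et := eps / (8 * (1 + eps)).
have hp' : 1 - et <= p by [].
have th0 : 0 < th by rewrite /th; apply: divr_gt0; lra.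
have the : th * (1 + eps) = eps / 12 by rewrite /th; field; lra.
have ete : et * (1 + eps) = eps / 8 by rewrite /et; field; lra.
have th1 : th <= 1 / 12.
  by rewrite /th ler_pdivrMr; lra.
have et0 : 0 <= et by rewrite /et; apply: divr_ge0; lra.
set x := th * (1 - p).
have x0 : 0 <= x by rewrite /x; apply: mulr_ge0; lra.
have xth : x <= th by rewrite /x; have := mulr_ge0 (ltW th0) (ltW p0); lra.
set M := (1 + p * th)^-1.
have pth0 : 0 <= p * th by apply: mulr_ge0; lra.
have pth1 : p * th <= th by have := mulr_ge0 (ltW th0) (subr_ge0_helper' (ltW p1)); lra.
have M0 : 0 <= M by rewrite /M invr_ge0; lra.
have hM : 1 - p <= M * (1 - p * (1 - x)).
  rewrite /M mulrC ler_pdivlMr; last lra.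
  rewrite /x; lra.
have hG := G_low (ltW p0) (ltW p1) a t (z := 1 - x) (M := M) (ltac:(lra)) M0 hM.
have zt0 : 0 < (1 - x) ^+ t by apply: exprn_gt0; lra.
have h1 : G p a t <= M ^+ a * ((1 - x)^-1) ^+ t by rewrite exprVn ler_pdivlMr.
apply: (le_trans h1).
have hMe : M <= expR (- (p * th * (1 - th))).
  apply: (le_trans (E3 _)); first lra.
  rewrite ler_expR lerN2; apply: ler_wpM2l => //; lra.
have hMa := expR_nat_ge a M0 hMe.
have hze : (1 - x)^-1 <= expR (x * (1 + 2 * th)).
  apply: (le_trans (E1 _)); first lra.
  rewrite ler_expR expr2; have := mulr_ge0 x0 (subr_ge0_helper' xth); nra.
have hza := expR_nat_ge t (ltac:(rewrite invr_ge0; lra) : 0 <= (1 - x)^-1) hze.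
apply: (le_trans (ler_pM (exprn_ge0 _ M0) (exprn_ge0 _ _) hMa hza)).
  by rewrite invr_ge0; lra.
rewrite -expRD ler_expR.
have c0 : 0 <= (1 + eps / 2) * b * n%:R * (1 - p)^-1.
  apply: mulr_ge0; last by rewrite invr_ge0; lra.
  by apply: mulr_ge0; [apply: mulr_ge0; lra|apply: ler0n].
have cx : (1 + eps / 2) * b * n%:R * (1 - p)^-1 * x = (1 + eps / 2) * b * n%:R * th.
  by rewrite /x; field; lra.
have hB : t%:R * (x * (1 + 2 * th)) <= (1 + eps / 2) * b * n%:R * th * (1 + 2 * th).
  rewrite -cx -mulrA; apply: ler_wpM2r => //; apply: mulr_ge0; lra.
have hA : a%:R * - (p * th * (1 - th)) <= (1 + eps) * b * n%:R * - (p * th * (1 - th)).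
  have q0 : 0 <= p * th * (1 - th) by apply: mulr_ge0 => //; lra.
  have := ler_wpM2r q0 ha; lra.
have hI : (1 + eps / 2) * (1 + 2 * th) - (1 + eps) * p * (1 - th) + eps / 8 <= 0.
  have h2 : (1 + eps) * (1 - et) * (1 - th) <= (1 + eps) * p * (1 - th).
    rewrite -!mulrA; apply: ler_wpM2l; first lra.
    by apply: ler_wpM2r; [lra|exact: hp'].
  have h3 : (1 + eps / 2) * (1 + 2 * th) - (1 + eps) * (1 - et) * (1 - th) + eps / 8
      = - (eps / 12) + th * (1 - eps / 8).
    by rewrite /th /et; field; lra.
  have : 0 <= th * eps by apply: mulr_ge0; lra.
  lra.
have K0 : 0 <= b * n%:R * th by apply: mulr_ge0; [apply: mulr_ge0; [lra|apply: ler0n]|lra].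
have := ler_wpM2l K0 hI.
rewrite mulr0 => hK.
have e4 : (1 + eps / 2) * b * n%:R * th * (1 + 2 * th) + (1 + eps) * b * n%:R * - (p * th * (1 - th))
   + b * th * eps / 8 * n%:R
   = b * n%:R * th * ((1 + eps / 2) * (1 + 2 * th) - (1 + eps) * p * (1 - th) + eps / 8) by ring.
lra.
Qed.
End Bounds.

Section Final.
Variables (R : realType) (p : R) (S : aux_setup p) (k : nat).
Local Notation Om := (aOmega S).
Local Notation P := (aP S).

Lemma sum_nat (X : Type) (l : seq X) (f : X -> \bar R) :
  (forall x, f x = +oo%E \/ exists j : nat, f x = (j%:R)%:E) ->
  (\sum_(x <- l) f x = +oo \/ exists j : nat, \sum_(x <- l) f x = (j%:R)%:E)%E.
Proof.
move=> hf; elim: l => [|x l IH]; first by right; exists 0%N; rewrite big_nil.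
rewrite big_cons; case: (hf x) => [->|[j ->]].
  by left; case: IH => [->|[j ->]].
case: IH => [->|[j' ->]]; first by left.
by right; exists (j + j')%N; rewrite natrD EFinD.
Qed.

Lemma Tnat w : auxT S k w = +oo%E \/ exists j : nat, auxT S k w = (j%:R)%:E.
Proof.
apply: sum_nat => x.
by case: (rem_cases R (fun m => aB x m w) (ps_used (aux_state k w) x)) => [[j [_ _ ->]]|->];
  [right; exists j|left].
Qed.

Lemma Ele_eq c : 0 <= c ->
  [set w | (auxT S k w <= c%:E)%E] = [set w | (auxT S k w <= ((Num.truncn c)%:R)%:E)%E].
Proof.
move=> c0; apply/seteqP; split => w /=; case: (Tnat w) => [->|[j ->]]; rewrite ?leye_eq //;
  rewrite !lee_fin ler_nat truncn_ge_nat //.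
Qed.

Lemma Ege_eq c : 0 < c -> exists t : nat, t%:R <= c /\
  [set w | (c%:E <= auxT S k w)%E] = ~` [set w | (auxT S k w <= (t%:R)%:E)%E].
Proof.
move=> c0.
have key : exists t : nat, t%:R <= c /\ forall j : nat, (j%:R < c) = (j <= t)%N.
  case: (eqVneq ((Num.truncn c)%:R) c) => hc.
    have t1 : (0 < Num.truncn c)%N by rewrite -(ltr_nat R) hc.
    exists (Num.truncn c).-1; split.
      by rewrite -[X in _ <= X]hc ler_nat leq_pred.
    move=> j; rewrite -[X in _ < X]hc ltr_nat; lia.
  exists (Num.truncn c); split; first by rewrite truncn_le ltW.
  move=> j; rewrite truncn_ge_nat; last exact: ltW.
  rewrite lt_neqAle.
  have -> : (j%:R != c) = true.
    by apply/negP => /eqP hj; move: hc; rewrite -hj natrK eqxx.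
  by [].
case: key => t [tc ht]; exists t; split => //.
apply/seteqP; split => w /=; case: (Tnat w) => [->|[j ->]]; rewrite ?leye_eq ?leey //=.
- by rewrite !lee_fin ler_nat -ht => h1 h2; move: h1; rewrite leNgt h2.
- by rewrite !lee_fin ler_nat -ht leNgt => /negP.
Qed.

Lemma ratio (A Bd Es : set Om) (d' dl : R) : measurable A -> measurable (A `&` Bd) ->
  Es `&` A = A `&` ~` Bd -> (P (A `&` Bd) <= d'%:E * P A)%E -> (0 < P A)%E ->
  d' < dl -> `| fine (P (Es `&` A)) / fine (P A) - 1 | < dl.
Proof.
move=> mA mB hE hle hpos hd.
have mD : measurable (A `\` Bd).
  rewrite (_ : A `\` Bd = A `\` (A `&` Bd)); first exact: measurableD.
  apply/seteqP; split => w /= [h1 h2]; split => //.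
    by case=> _ /h2.
  by move=> h; apply: h2.
have h1 : A `\` (A `&` Bd) = A `\` Bd.
  apply/seteqP; split => w /= [h1 h2]; split => //.
    by move=> h; apply: h2.
  by case=> _ /h2.
have e : P A = (P (A `\` Bd) + P (A `&` Bd))%E.
  by have := measureDI P mA mB; rewrite h1 setIA setIid => h; exact: h.
rewrite hE (_ : A `&` ~` Bd = A `\` Bd) //.
have fA : P A = (fine (P A))%:E by rewrite fineK // fin_num_measure.
have fB : P (A `&` Bd) = (fine (P (A `&` Bd)))%:E by rewrite fineK // fin_num_measure.
have fD : P (A `\` Bd) = (fine (P (A `\` Bd)))%:E by rewrite fineK // fin_num_measure.
have {}e : fine (P A) = fine (P (A `\` Bd)) + fine (P (A `&` Bd)).
  by rewrite e fineD // fin_num_measure.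
rewrite fB fA -EFinM lee_fin in hle.
rewrite fA lte_fin in hpos.
have hB0 : 0 <= fine (P (A `&` Bd)) by rewrite fine_ge0 // measure_ge0.
set a := fine (P A) in e hle hpos *; set bb := fine (P (A `&` Bd)) in e hle hB0 *.
set dd := fine (P (A `\` Bd)) in e *.
clear h1 hE fA fB fD.
have hsub : (dd / a - 1 : R) = - (bb / a) by rewrite e; field; lra.
rewrite hsub normrN ger0_norm; last by apply: divr_ge0; lra.
apply: le_lt_trans hd; rewrite ler_pdivrMr //.
Qed.
End Final.

Lemma exp_small (R : realType) (kap d : R) : 0 < kap -> 0 < d ->
  exists N0 : nat, forall n, (N0 <= n)%N -> expR (- kap * n%:R) < d.
Proof.
move=> k0 d0; exists (Num.truncn (1 / (kap * d))).+1 => n hn.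
have h1 : 1 / (kap * d) < n%:R.
  apply: (lt_le_trans (truncnS_gt _)); by rewrite ler_nat.
have kd : 0 < kap * d by apply: mulr_gt0.
have h2 : 1 < kap * d * n%:R by move: h1; rewrite ltr_pdivrMr // => h; lra.
have h3 := expR_ge1Dx (kap * n%:R).
rewrite mulNr expRN -[X in X < _]div1r ltr_pdivrMr ?expR_gt0 //.
have : d * (1 + kap * n%:R) <= d * expR (kap * n%:R) by apply: ler_wpM2l => //; exact: ltW.
lra.
Qed.

Lemma nonempty_of_pos (d : measure_display) (T : measurableType d) (R : realType)
  (P : probability T R) (A : set T) : (0 < P A)%E -> exists w, A w.
Proof.
move=> h; apply: contrapT => hn.
have : A = set0 by apply/seteqP; split => w // hw; apply: hn; exists w.
by move=> e; move: h; rewrite e measure0 ltxx.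
Qed.

Unset Implicit Arguments.

Theorem lemma2p3 (R : realType) (p : nat -> R)
  (hp : forall n, 0 < p n < 1) (hlim : p n @[n --> \oo] --> (1 : R^o))
  (S : forall n, aux_setup (p n)) (k : nat -> nat)
  (eps b : R) (heps : 0 < eps) (hb : 0 < b) :
  let q := fun n => (1 - p n)^-1 in
  cond_to_one S
    (fun n => [set w | (auxT (S n) (k n) w <= ((1 - eps / 2) * b * n%:R * q n)%:E)%E])
    (fun n => [set w | (auxA (S n) (k n) w)%:R <= (1 - eps) * b * n%:R])
  /\
  cond_to_one S
    (fun n => [set w | (((1 + eps / 2) * b * n%:R * q n)%:E <= auxT (S n) (k n) w)%E])
    (fun n => [set w | (1 + eps) * b * n%:R <= (auxA (S n) (k n) w)%:R]).
Proof.
move=> q; split.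
- move=> dl dl0.
  set kap := b * (eps / 12) * eps / 4.
  have k0 : 0 < kap by rewrite /kap; apply: divr_gt0 => //; apply: mulr_gt0 => //; apply: mulr_gt0 => //; lra.
  have [N0 hN0] := exp_small k0 (ltac:(lra) : 0 < dl / 2).
  exists (maxn N0 1) => n; rewrite geq_max => /andP [hN n1] hF /=.
  have [w0 hw0] := nonempty_of_pos hF.
  have bn0 : 0 < b * n%:R by apply: mulr_gt0 => //; rewrite ltr0n.
  have e1 : eps <= 1.
    move: hw0 => /= hw0; have a0 : 0 <= (auxA (S n) (k n) w0)%:R :> R by [].
    rewrite leNgt; apply/negP => he.
    have : (1 - eps) * (b * n%:R) < 0 by rewrite pmulr_llt0 //; lra.
    rewrite mulrA; lra.
  have hpn := hp n; move: (hpn) => /andP [pn0 pn1].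
  set c := (1 - eps / 2) * b * n%:R * q n.
  have c0 : 0 <= c.
    rewrite /c /q; apply: mulr_ge0; last by rewrite invr_ge0; lra.
    by apply: mulr_ge0; [apply: mulr_ge0; lra | apply: ler0n].
  rewrite (Ele_eq (S n) (k n) c0).
  set t := Num.truncn c.
  have := @assembly _ _ (S n) (k n) (fun a => a%:R <= (1 - eps) * b * n%:R) t true (dl / 2) (ltac:(lra)).
  case.
    move=> a /= ha; apply: le_trans (ltW (hN0 n hN)).
    apply: bound_i => //; first by rewrite heps.
    exact: ltW (truncnS_gt c).
  move=> mF mFB hle.
  apply: (ratio mF mFB) hle hF _; last lra.
  by rewrite setCK setIC.
- move=> dl dl0.
  set th := eps / (12 * (1 + eps)).
  set kap := b * th * eps / 8.
  have th0 : 0 < th by rewrite /th; apply: divr_gt0; lra.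
  have k0 : 0 < kap by rewrite /kap; apply: divr_gt0 => //; apply: mulr_gt0 => //; apply: mulr_gt0.
  have [N0 hN0] := exp_small k0 (ltac:(lra) : 0 < dl / 2).
  have et0 : 0 < eps / (8 * (1 + eps)) by apply: divr_gt0; lra.
  move/cvgrPdist_lt: hlim => /(_ _ et0) [N1 _ hN1].
  exists (maxn (maxn N0 N1) 1) => n; rewrite !geq_max => /andP [/andP [hN hN1'] n1] hF /=.
  have hpn := hp n; move: (hpn) => /andP [pn0 pn1].
  have pclose : 1 - eps / (8 * (1 + eps)) <= p n.
    have := hN1 n hN1'; rewrite /= ger0_norm; [lra | lra].
  have bn0 : 0 < b * n%:R by apply: mulr_gt0 => //; rewrite ltr0n.
  set c := (1 + eps / 2) * b * n%:R * q n.
  have c0 : 0 < c.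
    rewrite /c /q; apply: mulr_gt0; last by rewrite invr_gt0; lra.
    rewrite -mulrA; apply: mulr_gt0 => //; lra.
  have [t [tc ->]] := Ege_eq (S n) (k n) c0.
  have := @assembly _ _ (S n) (k n) (fun a => (1 + eps) * b * n%:R <= a%:R) t false (dl / 2) (ltac:(lra)).
  case.
    move=> a /= ha; apply: le_trans (ltW (hN0 n hN)).
    by apply: bound_ii.
  move=> mF mFB hle.
  by apply: (ratio mF mFB) hle hF _; last lra; rewrite setIC.
Qed.
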